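(* Let $f:[0,\infty)\to\mathbb{R}$ be convex with $f(1)=0$ and strictly convex at $x=1$, and let $G:[0,\mathsf{D_m}(f))\to[0,\infty)$ be continuous and non-decreasing with $G(0)=0$ and $G(x)>0$ for all $x>0$. Then $(G,f)$ is divergence-subadditive if and only if it is information-subadditive.
   Context: All alphabets are finite. For distributions $p\ll q$ on a finite set $\mathcal{X}$ and convex $f$ with $f(1)=0$, $D_f(p\|q)=\sum_x q(x) f(p(x)/q(x))$ with the convention $0f(0/0)=0$. $\mathsf{D_m}(f)=f(0)+\lim_{t\to\infty} f(t)/t$. Define $\mathcal{D}_{G,f}(p\|q)=G(D_f(p\|q))$ and, for random variables $X,Y$ on finite sets, $I_{G,f}(X;Y)=\min_{q_Y}\sum_x p_X(x)\,G(D_f(p_{Y|X=x}\|q_Y))$, the minimum over distributions $q_Y$ on the alphabet of $Y$. $(G,f)$ is divergence-subadditive if for all finite sets $\mathcal{Y},\mathcal{Z}$ and all distributions $q_Y\ll r_Y$ on $\mathcal{Y}$, $q_Z\ll r_Z$ on $\mathcal{Z}$: $\mathcal{D}_{G,f}(q_Yq_Z\|r_Yr_Z)\le \mathcal{D}_{G,f}(q_Y\|r_Y)+\mathcal{D}_{G,f}(q_Z\|r_Z)$. $(G,f)$ is information-subadditive if for all random variables $X,Y,Z$ on finite sets with $p_{XYZ}=p_Xp_{Y|X}p_{Z|X}$ (i.e. $Y\to X\to Z$ is a Markov chain), $I_{G,f}(X;YZ)\le I_{G,f}(X;Y)+I_{G,f}(X;Z)$. *)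

(* Defs.v *)
From HB Require Import structures.
From mathcomp Require Import all_boot all_order all_algebra.
From mathcomp Require Import all_classical all_reals all_analysis.
Set Implicit Arguments. Unset Strict Implicit. Unset Printing Implicit Defensive.
Import Order.TTheory GRing.Theory Num.Theory.
Import numFieldNormedType.Exports.
Local Open Scope classical_set_scope.
Local Open Scope ring_scope.

Section Defs.
Variable R : realType.

Definition convex_nonneg (f : R -> R) : Prop :=
  forall a b l : R, 0 <= a -> 0 <= b -> 0 <= l <= 1 ->
    f (l * a + (1 - l) * b) <= l * f a + (1 - l) * f b.

Definition strictly_convex_at1 (f : R -> R) : Prop :=
  forall a b l : R, 0 <= a -> 0 <= b -> 0 < l < 1 -> a != b ->
    l * a + (1 - l) * b = 1 ->
    f 1 < l * f a + (1 - l) * f b.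

Definition Dm (f : R -> R) : \bar R :=
  ((f 0)%:E + lim ((fun t : R => (f t / t)%:E) @ +oo%R))%E.

Definition Gdom (f : R -> R) : set R :=
  [set x : R | 0 <= x /\ (x%:E < Dm f)%E].

Definition is_dist (T : finType) (p : T -> R) : Prop :=
  (forall x, 0 <= p x) /\ \sum_(x : T) p x = 1.

Definition abscont (T : finType) (p q : T -> R) : Prop :=
  forall x, q x = 0 -> p x = 0.

(* f-divergence, with the convention 0 f(0/0) = 0 *)
Definition fdiv (f : R -> R) (T : finType) (p q : T -> R) : R :=
  \sum_(x : T) (if q x == 0 then 0 else q x * f (p x / q x)).

(* I_{G,f}(X;Y) for input law pX and conditional law W x = p_{Y|X=x};
   minimum (infimum) over output laws qY for which all the divergences
   D_f(p_{Y|X=x} || qY), x in the support of pX, are defined. *)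
Definition Iinfo (G f : R -> R) (X Y : finType) (pX : X -> R) (W : X -> Y -> R) : R :=
  inf [set v : R | exists qY : Y -> R,
         [/\ is_dist qY, (forall x, 0 < pX x -> abscont (W x) qY) &
             v = \sum_(x : X) pX x * G (fdiv f (W x) qY)]].

Definition divergence_subadditive (G f : R -> R) : Prop :=
  forall (Y Z : finType) (qY rY : Y -> R) (qZ rZ : Z -> R),
    is_dist qY -> is_dist rY -> is_dist qZ -> is_dist rZ ->
    abscont qY rY -> abscont qZ rZ ->
    G (fdiv f (fun yz : Y * Z => qY yz.1 * qZ yz.2)
              (fun yz : Y * Z => rY yz.1 * rZ yz.2))
      <= G (fdiv f qY rY) + G (fdiv f qZ rZ).

Definition margX (X Y Z : finType) (p : X * Y * Z -> R) (x : X) : R :=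
  \sum_(y : Y) \sum_(z : Z) p (x, y, z).
Definition condY (X Y Z : finType) (p : X * Y * Z -> R) (x : X) (y : Y) : R :=
  (\sum_(z : Z) p (x, y, z)) / margX p x.
Definition condZ (X Y Z : finType) (p : X * Y * Z -> R) (x : X) (z : Z) : R :=
  (\sum_(y : Y) p (x, y, z)) / margX p x.
Definition condYZ (X Y Z : finType) (p : X * Y * Z -> R) (x : X) (yz : Y * Z) : R :=
  p (x, yz.1, yz.2) / margX p x.

Definition information_subadditive (G f : R -> R) : Prop :=
  forall (X Y Z : finType) (p : X * Y * Z -> R),
    is_dist p ->
    (* Markov chain Y -> X -> Z : p_XYZ = p_X p_{Y|X} p_{Z|X} *)
    (forall x y z, p (x, y, z) = margX p x * condY p x y * condZ p x z) ->
    Iinfo G f (margX p) (condYZ p)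
      <= Iinfo G f (margX p) (condY p) + Iinfo G f (margX p) (condZ p).

End Defs.

(* Main.v *)
Require Import Defs.
From HB Require Import structures.
From mathcomp Require Import all_boot all_order all_algebra.
From mathcomp Require Import all_classical all_reals all_analysis.
Import Order.TTheory GRing.Theory Num.Theory.
Import numFieldNormedType.Exports.
Local Open Scope classical_set_scope.
Local Open Scope ring_scope.
From mathcomp Require Import ring lra.
Set Implicit Arguments. Unset Strict Implicit. Unset Printing Implicit Defensive.

Section Conv.
Variable R : realType.
Variable f : R -> R.
Hypothesis hc : convex_nonneg f.
Hypothesis hf1 : f 1 = 0.
Hypothesis hs : strictly_convex_at1 f.

Lemma conv3 x y z : 0 <= x -> x <= y -> y <= z -> x < z ->
  (z - x) * f y <= (z - y) * f x + (y - x) * f z.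
Proof.
move=> x0 xy yz xz.
have zx0 : 0 < z - x by rewrite subr_gt0.
pose l := (z - y) / (z - x).
have l01 : 0 <= l <= 1.
  apply/andP; split; first by rewrite divr_ge0 // ?subr_ge0 // ltW.
  rewrite ler_pdivrMr // mul1r; lra.
have hy : l * x + (1 - l) * z = y.
  have zxn : z - x != 0 by rewrite gt_eqF.
  rewrite /l; field => //.
have := hc x0 (le_trans x0 (le_trans xy yz)) l01.
rewrite hy => H.
have := ler_wpM2l (ltW zx0) H.
have zxn : z - x != 0 by rewrite gt_eqF.
have e1 : (z - x) * (l * f x + (1 - l) * f z) = (z - y) * f x + (y - x) * f z.
  rewrite /l; field => //.
by rewrite e1.
Qed.

Definition sgS := [set - f u / (1 - u) | u in [set u : R | 0 <= u < 1]].
Definition sga := sup sgS.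

Lemma sgS_ub v : sgS v -> v <= f 2.
Proof.
case=> u /andP[u0 u1] <-.
have := conv3 u0 (ltW u1) (_ : 1 <= 2) (_ : u < 2); rewrite hf1 => /(_ ltac:(lra) ltac:(lra)) H.
rewrite ler_pdivrMr ?subr_gt0 //; lra.
Qed.

Lemma sgS_hs : has_sup sgS.
Proof.
split; first by exists (- f 0 / (1 - 0)), 0 => //=; rewrite lexx ltr01.
by exists (f 2) => v /sgS_ub.
Qed.

Lemma subgrad t : 0 <= t -> sga * (t - 1) <= f t.
Proof.
move=> t0; have [t1|t1|->] := ltgtP t 1; last by rewrite hf1 subrr mulr0.
- have : - f t / (1 - t) <= sga by apply: ub_le_sup sgS_hs.2 _ _; exists t => //=; rewrite t0 t1.
  rewrite ler_pdivrMr ?subr_gt0 // => H; lra.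
- have : sga <= f t / (t - 1).
    apply: ge_sup; first by exists (- f 0 / (1 - 0)), 0 => //=; rewrite lexx ltr01.
    move=> _ [u /andP[u0 u1] <-].
    have := conv3 u0 (ltW u1) (ltW t1) (lt_trans u1 t1); rewrite hf1 => H.
    rewrite ler_pdivrMr ?subr_gt0 // mulrAC ler_pdivlMr ?subr_gt0 //; lra.
  rewrite ler_pdivlMr ?subr_gt0 //.
Qed.

Lemma g_nd s t : 1 <= s -> s <= t -> (f s - f 0)/s <= (f t - f 0)/t.
Proof.
move=> s1 st; have [->//|st'] := eqVneq s t.
have slt : s < t by rewrite lt_neqAle st' st.
have := conv3 (lexx 0) (le_trans ler01 s1) st (lt_le_trans ltr01 (le_trans s1 st)).
rewrite !subr0 => H.
have s0 : 0 < s by lra.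
have t0 : 0 < t by lra.
rewrite ler_pdivrMr // mulrAC ler_pdivlMr //; lra.
Qed.

Lemma Dm_ge T : 1 <= T -> ((f 0 + (f T - f 0)/T)%:E <= Dm f)%E.
Proof.
move=> T1.
pose u t := ((f (Num.max t 1) - f 0) / Num.max t 1)%:E.
have nd : nondecreasing_fun u.
  move=> x y xy; rewrite lee_fin; apply: g_nd; first by rewrite le_max lexx orbT.
  by rewrite ge_max !le_max xy lexx !orbT.
have c1 := nondecreasing_cvge nd.
have c2 : (fun t => (f 0 / t)%:E) @ +oo --> 0%:E.
  apply: cvg_EFin; first by near=> t.
  apply/cvgrPdist_lt => e e0.
  near=> t.
  have t1 : `|f 0| / e + 1 < t by near: t; apply: nbhs_pinfty_gt; rewrite num_real.
  have t0 : 0 < t by have := divr_ge0 (normr_ge0 (f 0)) (ltW e0); lra.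
  rewrite /= sub0r normrN normrM (gtr0_norm (x := t^-1)) ?invr_gt0 // ltr_pdivrMr //.
  have : `|f 0| / e < t by lra.
  by rewrite ltr_pdivrMr // mulrC.
have c3 := cvgeD (fin_num_adde_defl _ (fin_numE 0%:E)) c1 c2.
have c4 : (fun t => (f t / t)%:E) @ +oo --> (ereal_sup (range u) + 0)%E.
  apply: cvg_trans; last exact: c3.
  apply: near_eq_cvg; near=> t.
  have t1 : 1 < t by near: t; apply: nbhs_pinfty_gt; rewrite num_real.
  rewrite /u /= (_ : Num.max t 1 = t); last by apply/max_idPl; rewrite ltW.
  rewrite -EFinD; congr (_%:E).
  have t0 : t != 0 by rewrite gt_eqF // (lt_trans ltr01 t1).
  by field.
rewrite /Dm (cvg_lim _ c4) // adde0 EFinD leeD2l //.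
apply: ereal_sup_ubound; exists T => //.
by rewrite /u (_ : Num.max T 1 = T) //; apply/max_idPl.
Unshelve. all: by end_near.
Qed.

Lemma k1_pos T0 : 1 < T0 -> 0 < f 0 + (f T0 - f 0) / T0.
Proof.
move=> T1.
have T0n : T0 != 0 by rewrite gt_eqF // (lt_trans ltr01 T1).
have T0p : 0 < T0 by rewrite (lt_trans ltr01 T1).
have l01 : 0 < 1 - T0^-1 < 1.
  rewrite subr_gt0 invf_lt1 // T1 /= ltrBlDr ltrDl invr_gt0 //.
have := hs (lexx 0) (ltW T0p) l01 (negbT (lt_eqF T0p)) _.
rewrite mulr0 add0r.
have -> : (1 - (1 - T0^-1)) * T0 = 1 by field.
move=> /(_ erefl); rewrite hf1 => H.
have -> : f 0 + (f T0 - f 0) / T0 = (1 - T0^-1) * f 0 + T0^-1 * f T0.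
  by field.
have e : 1 - (1 - T0^-1) = T0^-1 by ring.
by rewrite e in H.
Qed.

Lemma chord_strict T0 t : 1 < T0 -> 0 < t -> t < T0 ->
  f t < f 0 + (f T0 - f 0) / T0 * t.
Proof.
move=> T1 t0 tT.
have k1 := k1_pos T1.
set g := (f T0 - f 0) / T0 in k1 *.
have T0p : 0 < T0 by rewrite (lt_trans ltr01 T1).
have hg : g * T0 = f T0 - f 0 by rewrite /g divfK // gt_eqF.
have [t1|t1] := leP t 1.
  have := conv3 (lexx 0) (ltW t0) t1 ltr01; rewrite hf1 !subr0 mulr0 addr0 mul1r => H.
  have := mulr_gt0 t0 k1; nra.
have := conv3 ler01 (ltW t1) (ltW tT) T1; rewrite hf1 mulr0 add0r => H.
have tT' : 0 < T0 - t by rewrite subr_gt0.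
have P1 := mulr_gt0 tT' k1.
have P2 : 0 < T0 - 1 by rewrite subr_gt0.
rewrite -(ltr_pM2l P2); nra.
Qed.

Lemma sum_abs (T : finType) (p q : T -> R) : abscont p q ->
  \sum_x (if q x == 0 then 0 else p x) = \sum_x p x.
Proof.
move=> ac; apply: eq_bigr => x _; case: eqP => // /ac ->. by [].
Qed.

Lemma sum_absq (T : finType) (q : T -> R) :
  \sum_x (if q x == 0 then 0 else q x) = \sum_x q x.
Proof. by apply: eq_bigr => x _; case: eqP. Qed.

Lemma fdiv_ge0 (T : finType) (p q : T -> R) : is_dist p -> is_dist q ->
  abscont p q -> 0 <= fdiv f p q.
Proof.
move=> [p0 p1] [q0 q1] ac.
have : \sum_x sga * ((if q x == 0 then 0 else p x) - q x) <= fdiv f p q.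
  apply: ler_sum => x _.
  case: eqP => [->|/eqP qn]; first by rewrite subrr mulr0.
  have qp : 0 < q x by rewrite lt0r qn q0.
  have := subgrad (divr_ge0 (p0 x) (q0 x)).
  move=> H; have H2 := ler_wpM2l (ltW qp) H.
  have -> : sga * (p x - q x) = q x * (sga * (p x / q x - 1)) by field.
  exact: H2.
by rewrite -mulr_sumr sumrB sum_abs // p1 q1 subrr mulr0.
Qed.

Lemma fdiv_lt (T : finType) (p q : T -> R) : is_dist p -> is_dist q ->
  abscont p q -> exists2 T0, 1 < T0 & fdiv f p q < f 0 + (f T0 - f 0) / T0.
Proof.
move=> [p0 p1] [q0 q1] ac.
pose t x := if q x == 0 then 0 else p x / q x.
have t0 x : 0 <= t x by rewrite /t; case: eqP => // _; rewrite divr_ge0.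
pose T0 := 2 + \sum_x t x.
have st0 : 0 <= \sum_x t x by apply: sumr_ge0.
have tT x : t x < T0.
  have : t x <= \sum_x t x by rewrite (bigD1 x) //= lerDl sumr_ge0.
  rewrite /T0; lra.
have T1 : 1 < T0 by rewrite /T0; lra.
exists T0 => //.
set g := (f T0 - f 0) / T0.
have [x0 px0] : exists x, p x != 0.
  case: (pselect (exists x, p x != 0)) => // H; exfalso.
  have : \sum_x p x = 0.
    apply: big1 => x _; apply/eqP; apply/negPn/negP => hx; apply: H; by exists x.
  by rewrite p1 => /eqP; rewrite oner_eq0.
have qx0 : q x0 != 0 by apply/negP => /eqP /ac /eqP; rewrite (negPf px0).
have -> : f 0 + g = \sum_x (if q x == 0 then 0 else q x * f 0 + g * p x).
  have -> : \sum_x (if q x == 0 then 0 else q x * f 0 + g * p x) =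
     \sum_x ((if q x == 0 then 0 else q x) * f 0 + g * (if q x == 0 then 0 else p x)).
    by apply: eq_bigr => x _; case: eqP => _; rewrite ?mul0r ?mulr0 ?addr0.
  by rewrite big_split /= -mulr_suml -mulr_sumr sum_absq sum_abs // p1 q1 mul1r mulr1.
rewrite /fdiv (bigD1 x0) //= [X in _ < X](bigD1 x0) //= (negPf qx0).
have qp x : q x != 0 -> 0 < q x by move=> h; rewrite lt0r h q0.
apply: ltr_leD.
  have tx0 : 0 < p x0 / q x0 by rewrite divr_gt0 //; [rewrite lt0r px0 p0 | exact: qp].
  have := chord_strict T1 tx0 (_ : p x0 / q x0 < T0).
  move=> /(_ ltac:(by have := tT x0; rewrite /t (negPf qx0))) H.
  rewrite -(ltr_pM2l (qp _ qx0)) in H.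
  apply: (lt_le_trans H); rewrite -/g.
  have E : q x0 * (f 0 + g * (p x0 / q x0)) = q x0 * f 0 + g * p x0 by field.
  by rewrite E.
apply: ler_sum => x _; case: eqP => [_|/eqP qn]; first by [].
have [->|pn] := eqVneq (p x) 0; first by rewrite mul0r mulr0 addr0.
have tx : 0 < p x / q x by rewrite divr_gt0 //; [rewrite lt0r pn p0 | exact: qp].
have := chord_strict T1 tx (_ : p x / q x < T0).
move=> /(_ ltac:(by have := tT x; rewrite /t (negPf qn))) H.
rewrite -(ltr_pM2l (qp _ qn)) in H.
apply: ltW; apply: (lt_le_trans H); rewrite -/g.
have E : q x * (f 0 + g * (p x / q x)) = q x * f 0 + g * p x by field.
by rewrite E.
Qed.

Lemma fdiv_Gdom (T : finType) (p q : T -> R) : is_dist p -> is_dist q ->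
  abscont p q -> Gdom f (fdiv f p q).
Proof.
move=> hp hq ac; split; first exact: fdiv_ge0.
have [T0 T1 H] := fdiv_lt hp hq ac.
apply: (lt_le_trans _ (Dm_ge (ltW T1))).
by rewrite lte_fin.
Qed.

Lemma hpos t : 0 <= t -> 0 <= f t - sga * (t - 1).
Proof. by move=> t0; rewrite subr_ge0 subgrad. Qed.

Lemma pt_lo t d : 0 <= t -> 0 < d < 1 ->
  (f (1 - d) + sga * d) * (Num.max (1 - t) 0 - d) <= d * (f t - sga * (t - 1)).
Proof.
move=> t0 /andP[d0 d1].
have h1 : 0 <= f (1 - d) + sga * d.
  have := hpos (_ : 0 <= 1 - d); rewrite (_ : 1 - d - 1 = - d); last by ring.
  by rewrite mulrN opprK; apply; lra.
have ht := hpos t0.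
have [td|td] := leP t (1 - d).
  rewrite (_ : Num.max (1 - t) 0 = 1 - t); last by apply/max_idPl; lra.
  have := conv3 t0 td (_ : 1 - d <= 1) (_ : t < 1); rewrite hf1 mulr0 addr0.
  move=> /(_ ltac:(lra) ltac:(lra)) H.
  have := mulr_ge0 (ltW d0) h1; nra.
have m : Num.max (1 - t) 0 - d <= 0 by rewrite subr_le0 ge_max; apply/andP; split; lra.
apply: (le_trans (mulr_ge0_le0 h1 m)).
exact: mulr_ge0 (ltW d0) ht.
Qed.

Lemma pt_hi t d : 0 <= t -> 0 < d < 1 ->
  (f (1 + d) - sga * d) * (Num.max (t - 1) 0 - d) <= d * (f t - sga * (t - 1)).
Proof.
move=> t0 /andP[d0 d1].
have h1 : 0 <= f (1 + d) - sga * d.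
  have := hpos (_ : 0 <= 1 + d); rewrite (_ : 1 + d - 1 = d); last by ring.
  by apply; lra.
have ht := hpos t0.
have [td|td] := leP (1 + d) t.
  rewrite (_ : Num.max (t - 1) 0 = t - 1); last by apply/max_idPl; lra.
  have := conv3 ler01 (_ : 1 <= 1 + d) td (_ : 1 < t); rewrite hf1 mulr0 add0r.
  move=> /(_ ltac:(lra) ltac:(lra)) H.
  have := mulr_ge0 (ltW d0) h1; nra.
have m : Num.max (t - 1) 0 - d <= 0 by rewrite subr_le0 ge_max; apply/andP; split; lra.
apply: (le_trans (mulr_ge0_le0 h1 m)).
exact: mulr_ge0 (ltW d0) ht.
Qed.

Lemma m_pos d : 0 < d < 1 -> 0 < f (1 - d) + f (1 + d).
Proof.
move=> /andP[d0 d1].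
have l01 : 0 < (2 : R)^-1 < 1.
  by apply/andP; split; [rewrite invr_gt0 ltr0n | rewrite invf_lt1 ?ltr0n // ltr1n].
have := hs (_ : 0 <= 1 - d) (_ : 0 <= 1 + d) l01 (_ : 1 - d != 1 + d) _.
move=> /(_ ltac:(lra) ltac:(lra) ltac:(apply/negP => /eqP; lra)).
rewrite hf1 => /(_ ltac:(field)).
have -> : 1 - (2 : R)^-1 = 2^-1 by field.
rewrite -mulrDr => H.
move: H; rewrite pmulr_rgt0; [by apply | by case/andP: l01].
Qed.

Lemma maxsub (x : R) : Num.max x 0 - Num.max (- x) 0 = x.
Proof.
have [x0|x0] := leP 0 x.
  have e1 : Num.max x 0 = x by apply/max_idPl.
  have e2 : Num.max (- x) 0 = 0 by apply/max_idPr; lra.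
  by rewrite ?e1 ?e2 subr0.
have e1 : Num.max x 0 = 0 by apply/max_idPr; lra.
have e2 : Num.max (- x) 0 = - x by apply/max_idPl; lra.
by rewrite ?e1 ?e2 sub0r opprK.
Qed.

Lemma maxadd (x : R) : Num.max x 0 + Num.max (- x) 0 = `|x|.
Proof.
have [x0|x0] := leP 0 x.
  have e1 : Num.max x 0 = x by apply/max_idPl.
  have e2 : Num.max (- x) 0 = 0 by apply/max_idPr; lra.
  by rewrite ?e1 ?e2 addr0 ger0_norm.
have e1 : Num.max x 0 = 0 by apply/max_idPr; lra.
have e2 : Num.max (- x) 0 = - x by apply/max_idPl; lra.
by rewrite ?e1 ?e2 add0r ltr0_norm.
Qed.

Lemma pinsker (T : finType) (Q s : T -> R) d : is_dist Q -> is_dist s ->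
  abscont Q s -> 0 < d < 1 ->
  fdiv f Q s < (f (1 - d) + f (1 + d)) / 2 -> \sum_x `|s x - Q x| < 4 * d.
Proof.
move=> [Q0 Q1] [s0 s1] ac d01; have /andP[d0 d1] := d01.
set c1 := f (1 - d) + sga * d; set c2 := f (1 + d) - sga * d.
set A := \sum_x Num.max (s x - Q x) 0; set B := \sum_x Num.max (Q x - s x) 0.
have L1 : c1 * (A - d) <= d * fdiv f Q s.
  have : \sum_x (d * sga * ((if s x == 0 then 0 else Q x) - s x) +
                  c1 * (Num.max (s x - Q x) 0 - d * s x)) <= d * fdiv f Q s.
    rewrite /fdiv mulr_sumr; apply: ler_sum => x _.
    case: eqP => [sx|/eqP sn].
      by rewrite sx (ac _ sx) !subrr maxxx !mulr0 subrr mulr0 addr0.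
    have sp : 0 < s x by rewrite lt0r sn s0.
    have := pt_lo (divr_ge0 (Q0 x) (s0 x)) d01.
    move=> /(ler_wpM2l (ltW sp)).
    move=> H.
    have Em : s x * Num.max (1 - Q x / s x) 0 = Num.max (s x - Q x) 0.
      by rewrite maxr_pMr ?(ltW sp) // mulr0 mulrBr mulr1 mulrC divfK.
    have E1 : s x * (c1 * (Num.max (1 - Q x / s x) 0 - d)) =
        c1 * (Num.max (s x - Q x) 0 - d * s x) by rewrite -Em; ring.
    have E2 : d * (s x * f (Q x / s x)) =
       s x * (d * (f (Q x / s x) - sga * (Q x / s x - 1))) + d * sga * (Q x - s x).
      by field.
    rewrite E2 -E1 addrC lerD2r; exact H.
  rewrite big_split /= -mulr_sumr -mulr_sumr sumrB sum_abs // Q1 s1 subrr mulr0 add0r.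
  by rewrite sumrB -mulr_sumr s1 mulr1.
have L2 : c2 * (B - d) <= d * fdiv f Q s.
  have : \sum_x (d * sga * ((if s x == 0 then 0 else Q x) - s x) +
                  c2 * (Num.max (Q x - s x) 0 - d * s x)) <= d * fdiv f Q s.
    rewrite /fdiv mulr_sumr; apply: ler_sum => x _.
    case: eqP => [sx|/eqP sn].
      by rewrite sx (ac _ sx) !subrr maxxx !mulr0 subrr mulr0 addr0.
    have sp : 0 < s x by rewrite lt0r sn s0.
    have := pt_hi (divr_ge0 (Q0 x) (s0 x)) d01.
    move=> /(ler_wpM2l (ltW sp)) H.
    have Em : s x * Num.max (Q x / s x - 1) 0 = Num.max (Q x - s x) 0.
      by rewrite maxr_pMr ?(ltW sp) // mulr0 mulrBr mulr1 mulrC divfK.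
    have E1 : s x * (c2 * (Num.max (Q x / s x - 1) 0 - d)) =
        c2 * (Num.max (Q x - s x) 0 - d * s x) by rewrite -Em; ring.
    have E2 : d * (s x * f (Q x / s x)) =
       s x * (d * (f (Q x / s x) - sga * (Q x / s x - 1))) + d * sga * (Q x - s x).
      by field.
    rewrite E2 -E1 addrC lerD2r; exact H.
  rewrite big_split /= -mulr_sumr -mulr_sumr sumrB sum_abs // Q1 s1 subrr mulr0 add0r.
  by rewrite sumrB -mulr_sumr s1 mulr1.
have AB : A = B.
  apply/eqP; rewrite -subr_eq0; apply/eqP.
  rewrite /A /B -sumrB (eq_bigr (fun x => s x - Q x)); last first.
    move=> x _; rewrite (_ : Q x - s x = - (s x - Q x)); first exact: maxsub.
    by rewrite opprB.
  by rewrite sumrB s1 Q1 subrr.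
have S : \sum_x `|s x - Q x| = A + B.
  rewrite /A /B -big_split; apply: eq_bigr => x _ /=.
  rewrite (_ : Q x - s x = - (s x - Q x)); first by rewrite maxadd.
  by rewrite opprB.
move=> H.
have mp := m_pos d01.
have Em : f (1 - d) + f (1 + d) = c1 + c2 by rewrite /c1 /c2; ring.
have H2 : d * fdiv f Q s < d * ((f (1 - d) + f (1 + d)) / 2) by rewrite ltr_pM2l.
have H3 : (c1 + c2) * (A - d) < (c1 + c2) * d.
  have E4 : (c1 + c2) * (A - d) = c1 * (A - d) + c2 * (B - d) by rewrite AB; ring.
  rewrite E4 -Em.
  have E3 : d * ((f (1 - d) + f (1 + d)) / 2) = (f (1 - d) + f (1 + d)) * d / 2 by ring.
  rewrite E3 in H2; lra.
rewrite ltr_pM2l -?Em // in H3.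
rewrite S -AB; lra.
Qed.

Definition Kc (t0 : R) := `|(f t0 - f (t0 / 2)) / (t0 / 2)| + `|(f (2 * t0) - f t0) / t0|.

Lemma Kc_ge0 t0 : 0 <= Kc t0.
Proof. by rewrite /Kc addr_ge0. Qed.

Lemma lip t0 u : 0 < t0 -> 0 <= u -> f t0 - Kc t0 * `|u - t0| <= f u.
Proof.
move=> t0p u0.
set a1 := (f t0 - f (t0 / 2)) / (t0 / 2).
set a2 := (f (2 * t0) - f t0) / t0.
have hp : 0 < t0 / 2 by rewrite divr_gt0.
have ha1 : a1 * (t0 / 2) = f t0 - f (t0 / 2) by rewrite /a1 divfK // gt_eqF.
have ha2 : a2 * t0 = f (2 * t0) - f t0 by rewrite /a2 divfK // gt_eqF.
have n1 := normr_ge0 a1; have n2 := normr_ge0 a2.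
have [ut|ut] := leP t0 u.
  rewrite ger0_norm ?subr_ge0 //.
  have l1 : - `|a1| <= a1 by rewrite lerNl -normrN ler_norm.
  have k : f t0 + a1 * (u - t0) <= f u.
    have [<-|ut'] := eqVneq t0 u; first by rewrite subrr mulr0 addr0.
    have := conv3 (ltW hp) (_ : t0 / 2 <= t0) ut (_ : t0 / 2 < u).
    move=> /(_ ltac:(lra) ltac:(rewrite lt_neqAle in ut *; lra)) H.
    rewrite -(ler_pM2l hp); nra.
  have : - `|a1| * (u - t0) <= a1 * (u - t0) by apply: ler_wpM2r; lra.
  rewrite /Kc -/a1 -/a2; nra.
rewrite ltr0_norm ?subr_lt0 //.
have l2 : a2 <= `|a2| by rewrite ler_norm.
have k : f t0 - a2 * (t0 - u) <= f u.
  have := conv3 u0 (ltW ut) (_ : t0 <= 2 * t0) (_ : u < 2 * t0).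
  move=> /(_ ltac:(lra) ltac:(lra)) H.
  rewrite -(ler_pM2l t0p); nra.
have : a2 * (t0 - u) <= `|a2| * (t0 - u) by apply: ler_wpM2r; lra.
rewrite /Kc -/a1 -/a2; nra.
Qed.

Definition Cx (p q : R) := `|f 0| + `|f (p / q)| + Kc (p / q) * (p / q).

Lemma term_lb (p q s : R) : 0 <= p -> 0 <= q -> 0 <= s -> (q = 0 -> p = 0) ->
  (s = 0 -> p = 0) ->
  (if q == 0 then 0 else q * f (p / q)) - Cx p q * `|s - q|
    <= (if s == 0 then 0 else s * f (p / s)).
Proof.
move=> p0 q0 s0 acq acs.
have t0 : 0 <= p / q by rewrite divr_ge0.
have hC1 : `|f 0| <= Cx p q.
  by rewrite /Cx -addrA lerDl addr_ge0 // mulr_ge0 // Kc_ge0.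
have hC0 := le_trans (normr_ge0 _) hC1.
have na := normr_ge0 (s - q).
have nf := ler_norm (f 0); have nf' := ler_normr (f 0).
have [qz|qn] := eqVneq q 0.
  have pz := acq qz; rewrite qz pz in hC1 *.
  rewrite ?eqxx subr0 ?mul0r.
  case: eqP => [->|_]; first by rewrite normr0 mulr0 subrr.
  rewrite ger0_norm // sub0r lerNl -mulrN.
  have : - f 0 <= `|f 0| by rewrite -normrN ler_norm.
  move=> H; have := ler_wpM2r s0 hC1; nra.
have qp : 0 < q by rewrite lt0r qn q0.
have [pz|pn] := eqVneq p 0.
  rewrite pz in hC1 *; rewrite !mul0r.
  have -> : (if s == 0 then 0 else s * f 0) = s * f 0 by case: eqP => // ->; rewrite mul0r.
  have H : (q - s) * f 0 <= `|s - q| * `|f 0|.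
    by apply: (le_trans (ler_norm _)); rewrite normrM distrC.
  have := ler_wpM2r na hC1; nra.
have sn : s != 0 by apply/negP => /eqP /acs /eqP; rewrite (negPf pn).
have sp : 0 < s by rewrite lt0r sn s0.
have tp : 0 < p / q by rewrite divr_gt0 // lt0r pn p0.
have := lip tp (divr_ge0 p0 s0) => H.
set t := p / q in H t0 tp *.
have E : s * `|p / s - t| = t * `|s - q|.
  have -> : p / s - t = - (t * (s - q)) / s by rewrite /t; field; apply/andP; split.
  rewrite normrM normrN normfV normrM (ger0_norm (ltW sp)) (ger0_norm (ltW tp)).
  by field.
have H2 := ler_wpM2l (ltW sp) H.
rewrite mulrBr mulrA (mulrC s (Kc t)) -mulrA E in H2.
have H3 : (q - s) * f t <= `|s - q| * `|f t|.
  by apply: (le_trans (ler_norm _)); rewrite normrM distrC.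
have Kt := mulr_ge0 (Kc_ge0 t) (ltW tp).
rewrite ?(negPf qn) ?(negPf sn) /Cx -/t.
have nft := normr_ge0 (f t).
have nf0 := normr_ge0 (f 0).
nra.
Qed.

Lemma fdiv_lb (T : finType) (P Q s : T -> R) :
  (forall x, 0 <= P x) -> (forall x, 0 <= Q x) -> (forall x, 0 <= s x) ->
  abscont P Q -> abscont P s ->
  fdiv f P Q - \sum_x Cx (P x) (Q x) * `|s x - Q x| <= fdiv f P s.
Proof.
move=> P0 Q0 s0 aQ aS; rewrite /fdiv -sumrB; apply: ler_sum => x _.
by apply: term_lb => //; [exact: aQ | exact: aS].
Qed.

Lemma fdiv_self (T : finType) (q : T -> R) : fdiv f q q = 0.
Proof.
rewrite /fdiv big1 // => x _; case: eqP => // /eqP qn.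
by rewrite divff // hf1 mulr0.
Qed.
End Conv.

Section Gen.
Variable R : realType.

Lemma sum_pair (A B : finType) (F : A * B -> R) :
  \sum_(w : A * B) F w = \sum_a \sum_b F (a, b).
Proof. by rewrite (pair_bigA _ (fun a b => F (a, b))); apply: eq_bigr => -[a b]. Qed.

Lemma prod_dist (A B : finType) (a : A -> R) (b : B -> R) :
  is_dist a -> is_dist b -> is_dist (fun w : A * B => a w.1 * b w.2).
Proof.
move=> [a0 a1] [b0 b1]; split; first by move=> w; rewrite mulr_ge0.
rewrite sum_pair /=; under eq_bigr do rewrite -mulr_sumr b1 mulr1.
exact: a1.
Qed.

Lemma prod_abs (A B : finType) (a a' : A -> R) (b b' : B -> R) :
  abscont a a' -> abscont b b' ->
  abscont (fun w : A * B => a w.1 * b w.2) (fun w => a' w.1 * b' w.2).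
Proof.
move=> ha hb w /eqP; rewrite mulf_eq0 => /orP[/eqP/ha ->|/eqP/hb ->];
  by rewrite ?mul0r ?mulr0.
Qed.

Definition Iset (G f : R -> R) (X Y : finType) (pX : X -> R) (W : X -> Y -> R) :=
  [set v : R | exists qY : Y -> R,
         [/\ is_dist qY, (forall x, 0 < pX x -> abscont (W x) qY) &
             v = \sum_(x : X) pX x * G (fdiv f (W x) qY)]].

Lemma IinfoE (G f : R -> R) (X Y : finType) (pX : X -> R) (W : X -> Y -> R) :
  Iinfo G f pX W = inf (Iset G f pX W).
Proof. by []. Qed.
End Gen.
Lemma cont_eps (R : realType) (A : set R) (g : R -> R) x e :
  {within A, continuous g} -> A x -> 0 < e ->
  exists2 r, 0 < r & forall y, A y -> `|x - y| < r -> `|g x - g y| < e.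
Proof.
move=> hg Ax e0.
have := (subspace_continuousP A g).1 hg x Ax.
move=> /cvgrPdist_lt /(_ e e0).
rewrite near_withinE => /nbhs_ballP [r /= r0 H].
by exists r => // y Ay xy; apply: H.
Qed.

Section Main.
Variables (R : realType) (f G : R -> R).
Hypothesis hc : convex_nonneg f.
Hypothesis hf1 : f 1 = 0.
Hypothesis hs : strictly_convex_at1 f.
Hypothesis hGc : {within Gdom f, continuous G}.
Hypothesis hGm : forall x y, Gdom f x -> Gdom f y -> x <= y -> G x <= G y.
Hypothesis hG0 : forall x, Gdom f x -> 0 <= G x.
Hypothesis hG00 : G 0 = 0.
Hypothesis hGp : forall x, Gdom f x -> 0 < x -> 0 < G x.

Lemma Iset_ge0 (X Y : finType) (pX : X -> R) (W : X -> Y -> R) :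
  (forall x, 0 <= pX x) -> (forall x, 0 < pX x -> is_dist (W x)) ->
  forall v, Iset G f pX W v -> 0 <= v.
Proof.
move=> p0 Wd v [q [qd ac ->]]; apply: sumr_ge0 => x _.
have [->|pn] := eqVneq (pX x) 0; first by rewrite mul0r.
have pp : 0 < pX x by rewrite lt0r pn p0.
by rewrite mulr_ge0 // hG0 //; apply: fdiv_Gdom => //; [exact: Wd | exact: ac].
Qed.

Lemma Iinfo_le (X Y : finType) (pX : X -> R) (W : X -> Y -> R) v :
  (forall x, 0 <= pX x) -> (forall x, 0 < pX x -> is_dist (W x)) ->
  Iset G f pX W v -> Iinfo G f pX W <= v.
Proof.
move=> p0 Wd hv; rewrite IinfoE; apply: ge_inf => //.
by exists 0 => w /(Iset_ge0 p0 Wd).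
Qed.

Lemma Iinfo_ge (X Y : finType) (pX : X -> R) (W : X -> Y -> R) c :
  (exists v, Iset G f pX W v) -> (forall v, Iset G f pX W v -> c <= v) ->
  c <= Iinfo G f pX W.
Proof. by move=> ne lb; rewrite IinfoE; apply: lb_le_inf. Qed.

Lemma sum3 (X Y Z : finType) (p : X * Y * Z -> R) :
  \sum_w p w = \sum_x \sum_y \sum_z p (x, y, z).
Proof.
by rewrite sum_pair (sum_pair (fun xy : X * Y => \sum_z p (xy, z))).
Qed.

Lemma div_info : divergence_subadditive G f -> information_subadditive G f.
Proof.
move=> hd X Y Z p [p0 p1] hM.
have m0 x : 0 <= margX p x by apply: sumr_ge0 => y _; apply: sumr_ge0.
have cYd x : 0 < margX p x -> is_dist (condY p x).
  move=> mp; split; first by move=> y; apply: divr_ge0 => //; apply: sumr_ge0.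
  by rewrite /condY -mulr_suml divff // gt_eqF.
have cZd x : 0 < margX p x -> is_dist (condZ p x).
  move=> mp; split; first by move=> y; apply: divr_ge0 => //; apply: sumr_ge0.
  by rewrite /condZ -mulr_suml exchange_big /= divff // gt_eqF.
have cYZe x : 0 < margX p x ->
    condYZ p x = (fun w => condY p x w.1 * condZ p x w.2).
  move=> mp; apply: funext => -[y z] /=; rewrite /condYZ hM /=.
  by field; rewrite gt_eqF.
have cYZd x : 0 < margX p x -> is_dist (condYZ p x).
  by move=> mp; rewrite cYZe //; apply: prod_dist; [exact: cYd | exact: cZd].
have p1' : \sum_x \sum_y \sum_z p (x, y, z) = 1 by rewrite -sum3.
have key : forall vY vZ, Iset G f (margX p) (condY p) vY ->
    Iset G f (margX p) (condZ p) vZ -> Iinfo G f (margX p) (condYZ p) <= vY + vZ.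
  move=> vY vZ [qY [qYd aY ->]] [qZ [qZd aZ ->]].
  apply: le_trans; first apply: (Iinfo_le m0 cYZd (v :=
     \sum_x margX p x * G (fdiv f (condYZ p x) (fun w => qY w.1 * qZ w.2)))).
    exists (fun w => qY w.1 * qZ w.2); split => //; first exact: prod_dist.
    by move=> x mp; rewrite cYZe //; apply: prod_abs; [exact: aY | exact: aZ].
  rewrite -big_split; apply: ler_sum => x _ /=.
  have [->|mn] := eqVneq (margX p x) 0; first by rewrite !mul0r addr0.
  have mp : 0 < margX p x by rewrite lt0r mn m0.
  rewrite -mulrDr ler_wpM2l // cYZe //.
  by apply: hd; [exact: cYd | exact: qYd | exact: cZd | exact: qZd | exact: aY | exact: aZ].
have neY : exists v, Iset G f (margX p) (condY p) v.
  pose qY0 y := \sum_x \sum_z p (x, y, z).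
  exists (\sum_x margX p x * G (fdiv f (condY p x) qY0)), qY0; split => //.
    split; first by move=> y; do 2 (apply: sumr_ge0 => ? _).
    by rewrite /qY0 exchange_big.
  move=> x mp y /eqP; rewrite psumr_eq0 => [/allP H|]; last first.
    by move=> ? _; apply: sumr_ge0.
  have := H x (mem_index_enum _); rewrite /= => /eqP Hx.
  by rewrite /condY Hx mul0r.
have neZ : exists v, Iset G f (margX p) (condZ p) v.
  pose qZ0 z := \sum_x \sum_y p (x, y, z).
  exists (\sum_x margX p x * G (fdiv f (condZ p x) qZ0)), qZ0; split => //.
    split; first by move=> y; do 2 (apply: sumr_ge0 => ? _).
    rewrite /qZ0 exchange_big /= -p1'; apply: eq_bigr => x _.
    by rewrite exchange_big.
  move=> x mp z /eqP; rewrite psumr_eq0 => [/allP H|]; last first.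
    by move=> ? _; apply: sumr_ge0.
  have := H x (mem_index_enum _); rewrite /= => /eqP Hx.
  by rewrite /condZ Hx mul0r.
set I := Iinfo G f (margX p) (condYZ p).
have h1 : forall vZ, Iset G f (margX p) (condZ p) vZ ->
    I - vZ <= Iinfo G f (margX p) (condY p).
  move=> vZ hZ; apply: Iinfo_ge neY _ => vY hY.
  have := key vY vZ hY hZ; lra.
have h2 : I - Iinfo G f (margX p) (condY p) <= Iinfo G f (margX p) (condZ p).
  apply: Iinfo_ge neZ _ => vZ hZ; have := h1 vZ hZ; lra.
lra.
Qed.

Lemma info_div : information_subadditive G f -> divergence_subadditive G f.
Proof.
move=> hi Y Z qY rY qZ rZ dqY drY dqZ drZ aY aZ.
pose P := fun w : Y * Z => qY w.1 * qZ w.2.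
pose Q := fun w : Y * Z => rY w.1 * rZ w.2.
have dP : is_dist P := prod_dist dqY dqZ.
have dQ : is_dist Q := prod_dist drY drZ.
have aPQ : abscont P Q := prod_abs aY aZ.
have gY := fdiv_Gdom hc hf1 hs dqY drY aY.
have gZ := fdiv_Gdom hc hf1 hs dqZ drZ aZ.
have hDs := fdiv_Gdom hc hf1 hs dP dQ aPQ.
rewrite -/P -/Q.
set Ds := fdiv f P Q in hDs *.
set S := G (fdiv f qY rY) + G (fdiv f qZ rZ).
have S0 : 0 <= S by rewrite addr_ge0 // hG0.
rewrite leNgt; apply/negP => HS.
have Dpos : 0 < Ds.
  rewrite lt0r hDs.1 andbT; apply/negP => /eqP D0.
  by move: HS; rewrite D0 hG00 ltNge S0.
set gam := G Ds - S.
have gp : 0 < gam by rewrite subr_gt0.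
have g2 : 0 < gam / 2 by rewrite divr_gt0.
have [rho rho0 Hc] := cont_eps hGc hDs g2.
pose C := \sum_w Cx f (P w) (Q w).
have Cx0 w : 0 <= Cx f (P w) (Q w).
  rewrite /Cx addr_ge0 // mulr_ge0 ?Kc_ge0 // divr_ge0 //.
    by rewrite /P mulr_ge0 // ?dqY.1 ?dqZ.1.
  by rewrite /Q mulr_ge0 // ?drY.1 ?drZ.1.
have C0 : 0 <= C by apply: sumr_ge0.
have C1 : 0 < 8 * (C + 1) by rewrite mulr_gt0 //; lra.
pose d := Num.min (2^-1) (rho / (8 * (C + 1))).
have d0 : 0 < d by rewrite lt_min invr_gt0 ltr0n divr_gt0.
have d1 : d < 1 by rewrite gt_min invf_lt1 ?ltr0n // ltr1n.
have dC : d * (8 * (C + 1)) <= rho.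
  by rewrite -ler_pdivlMr // ge_min lexx orbT.
have d01 : 0 < d < 1 by rewrite d0 d1.
pose m := (f (1 - d) + f (1 + d)) / 2.
have m0 : 0 < m by rewrite divr_gt0 // m_pos.
pose eta := Num.min Ds m.
have eta0 : 0 < eta by rewrite lt_min Dpos m0.
have etaD : eta <= Ds by rewrite ge_min lexx.
have etam : eta <= m by rewrite ge_min lexx orbT.
have geta : Gdom f eta.
  split; first exact: ltW.
  by apply: le_lt_trans hDs.2; rewrite lee_fin.
have Ge := hGp geta eta0.
pose M := G Ds - gam / 2.
have M0 : 0 < M by rewrite /M /gam; lra.
pose eps := G eta / (G eta + M).
have eps0 : 0 < eps by rewrite divr_gt0 // addr_gt0.
have GM : 0 < G eta + M by rewrite addr_gt0.
have eps1 : eps < 1 by rewrite /eps ltr_pdivrMr // mul1r ltrDl.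
have epsE : (1 - eps) * G eta = eps * M.
  by rewrite /eps; field; rewrite gt_eqF.
pose pX := fun b : bool => if b then eps else 1 - eps.
pose WY := fun b : bool => if b then qY else rY.
pose WZ := fun b : bool => if b then qZ else rZ.
pose p := fun w : bool * Y * Z => pX w.1.1 * WY w.1.1 w.1.2 * WZ w.1.1 w.2.
have pX0 b : 0 < pX b by case: b => /=; lra.
have WYd b : is_dist (WY b) by case: b.
have WZd b : is_dist (WZ b) by case: b.
have mX : margX p = pX.
  apply: funext => b; rewrite /margX /p /=.
  under eq_bigr => y _ do rewrite -mulr_sumr (WZd b).2 mulr1.
  by rewrite -mulr_sumr (WYd b).2 mulr1.
have cY : condY p = WY.
  apply: funext => b; apply: funext => y; rewrite /condY mX /p /=.
  rewrite -mulr_sumr (WZd b).2 mulr1; field; exact: lt0r_neq0.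
have cZ : condZ p = WZ.
  apply: funext => b; apply: funext => z; rewrite /condZ mX /p /=.
  rewrite -mulr_suml -mulr_sumr (WYd b).2 mulr1; field; exact: lt0r_neq0.
have cYZ : condYZ p = fun b w => WY b w.1 * WZ b w.2.
  apply: funext => b; apply: funext => w; rewrite /condYZ mX /p /=.
  field; exact: lt0r_neq0.
have pd : is_dist p.
  split.
    move=> w; rewrite /p mulr_ge0 // ?mulr_ge0 //; first exact: ltW.
      exact: (WYd _).1.
    exact: (WZd _).1.
  rewrite sum3 (eq_bigr (fun b => pX b)); first by rewrite big_bool /=; lra.
  by move=> b _; rewrite -mX.
have hM : forall x y z, p (x, y, z) = margX p x * condY p x y * condZ p x z.
  by move=> x y z; rewrite mX cY cZ.
have := hi _ _ _ p pd hM; rewrite mX cY cZ cYZ => Hi.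
have pXn b : 0 <= pX b by apply: ltW.
have UY : Iinfo G f pX WY <= eps * G (fdiv f qY rY).
  apply: Iinfo_le => //.
  exists rY; split => //; first by case => _ /=; [exact: aY | by []].
  by rewrite big_bool /= fdiv_self // hG00 mulr0 addr0.
have UZ : Iinfo G f pX WZ <= eps * G (fdiv f qZ rZ).
  apply: Iinfo_le => //.
  exists rZ; split => //; first by case => _ /=; [exact: aZ | by []].
  by rewrite big_bool /= fdiv_self // hG00 mulr0 addr0.
have LB : eps * M <= Iinfo G f pX (fun b w => WY b w.1 * WZ b w.2).
  apply: Iinfo_ge.
    exists (\sum_b pX b * G (fdiv f (fun w => WY b w.1 * WZ b w.2) Q)), Q.
    by split => //; case => _ /=; [exact: aPQ | by []].
  move=> v [s [sd ac ->]]; rewrite big_bool /=.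
  have aPs : abscont P s := ac true (pX0 true).
  have aQs : abscont Q s := ac false (pX0 false).
  change (eps * M <= eps * G (fdiv f P s) + (1 - eps) * G (fdiv f Q s)).
  have gPs := fdiv_Gdom hc hf1 hs dP sd aPs.
  have gQs := fdiv_Gdom hc hf1 hs dQ sd aQs.
  have GP0 := hG0 gPs; have GQ0 := hG0 gQs.
  have e1 : 0 <= 1 - eps by lra.
  have [big|small] := leP eta (fdiv f Q s).
    have := hGm geta gQs big => H.
    have := ler_wpM2l e1 H; have := mulr_ge0 (ltW eps0) GP0; lra.
  have sm : fdiv f Q s < (f (1 - d) + f (1 + d)) / 2 by apply: lt_le_trans etam.
  have Hp := pinsker hc hf1 hs dQ sd aQs d01 sm.
  have P0 w : 0 <= P w by exact: dP.1.
  have Q0 w : 0 <= Q w by exact: dQ.1.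
  have lb := fdiv_lb hc P0 Q0 sd.1 aPQ aPs; rewrite -/Ds in lb.
  have bnd : \sum_w Cx f (P w) (Q w) * `|s w - Q w| <= C * \sum_w `|s w - Q w|.
    rewrite /C mulr_suml; apply: ler_sum => w _; apply: ler_wpM2l => //.
    by rewrite (bigD1 w) //= lerDl sumr_ge0.
  have bnd2 : C * \sum_w `|s w - Q w| <= C * (4 * d) by rewrite ler_wpM2l // ltW.
  have GP : M <= G (fdiv f P s).
    have [h|h] := leP Ds (fdiv f P s).
      have := hGm hDs gPs h; rewrite /M; lra.
    have dist : `|Ds - fdiv f P s| < rho.
      rewrite gtr0_norm ?subr_gt0 //.
      have : 4 * d * C < rho by nra.
      lra.
    have := Hc _ gPs dist; rewrite ltr_norml => /andP[_ h2].
    rewrite /M; lra.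
  have := ler_wpM2l (ltW eps0) GP; have := mulr_ge0 e1 GQ0; lra.
have F := le_trans LB (le_trans Hi (lerD UY UZ)).
have : eps * S < eps * M by rewrite ltr_pM2l // /M /gam; lra.
rewrite /S in F *; lra.
Qed.

End Main.

Unset Implicit Arguments.

Theorem theorem1 (R : realType) (f G : R -> R) :
  convex_nonneg f -> f 1 = 0 -> strictly_convex_at1 f ->
  {within Gdom f, continuous G} ->
  (forall x y, Gdom f x -> Gdom f y -> x <= y -> G x <= G y) ->
  (forall x, Gdom f x -> 0 <= G x) ->
  G 0 = 0 ->
  (forall x, Gdom f x -> 0 < x -> 0 < G x) ->
  (divergence_subadditive G f <-> information_subadditive G f).
Proof.
move=> hc hf1 hs hGc hGm hG0 hG00 hGp.
by split; [apply: div_info | apply: info_div].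
Qed.
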